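(* Assume A2, let $x\in\mathcal I$, suppose the $x$-threshold word $\pi$ exists, and let $n\ge 1$. Then: (1) if $x\le y_{10^{n-1}}$ then $0^n$ does not occur as a factor of $\pi^\omega$; (2) if $x\ge y_{010^{n-1}}$ then $10^{n-1}1$ does not occur as a factor of $\pi^\omega$; (3) if $x\ge y_{01^{n-1}}$ then $1^n$ does not occur as a factor of $\pi^\omega$; (4) if $x\le y_{101^{n-1}}$ then $01^{n-1}0$ does not occur as a factor of $\pi^\omega$. (Here $0^0=1^0=\epsilon$.)
   Context: Words are finite strings over $\{0,1\}$; $\epsilon$ is the empty word, $w_k$ the $k$-th letter, $w^\omega$ the infinite repetition of $w$. Let $\mathcal I\subseteq\mathbb R$ be an interval and $\phi_0,\phi_1:\mathcal I\to\mathcal I$. For a word $w$ put $\phi_w:=\phi_{w_{|w|}}\circ\cdots\circ\phi_{w_1}$ (the first letter is applied first), $\phi_\epsilon=\mathrm{id}$. Assumption A2: for all $x<y$ in $\mathcal I$ and $k\in\{0,1\}$, $\phi_k(x)<\phi_k(y)$ and $\phi_k(y)-\phi_k(x)<y-x$; moreover $\phi_0,\phi_1$ have fixed points $y_0,y_1\in\mathcal I$ with $y_1<y_0$. Under A2, for every non-empty word $w$ the map $\phi_w$ has a unique fixed point in $\mathcal I$, denoted $y_w$. The $x$-threshold orbit is the sequence $(x_k)_{k\ge1}$ with $x_1=\phi_1(x)$ and $x_{k+1}=\phi_1(x_k)$ if $x_k\ge x$, $x_{k+1}=\phi_0(x_k)$ if $x_k<x$. The $x$-threshold word is the shortest (finite,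 non-empty) word $\pi$ such that $x_{k+1}=\phi_{(\pi^\omega)_k}(x_k)$ for all $k\ge1$, when such a word exists. *)

(* Defs.v *)
(* real numbers. Letters 0/1 are encoded as false/true. *)
From Stdlib Require Import Reals List Arith.
Import ListNotations.
Open Scope R_scope.

Definition word := list bool.

Definition phiL (phi0 phi1 : R -> R) (b : bool) : R -> R :=
  if b then phi1 else phi0.

(* phi_w = phi_{w_|w|} o ... o phi_{w_1}: first letter applied first *)
Definition phiW (phi0 phi1 : R -> R) (w : word) (y : R) : R :=
  fold_left (fun acc b => phiL phi0 phi1 b acc) w y.

Definition is_interval (I : R -> Prop) : Prop :=
  forall a b c, I a -> I c -> a <= b -> b <= c -> I b.

Definition A2 (I : R -> Prop) (phi0 phi1 : R -> R) : Prop :=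
  (forall y, I y -> I (phi0 y)) /\ (forall y, I y -> I (phi1 y)) /\
  (forall (k : bool) a b, I a -> I b -> a < b ->
      phiL phi0 phi1 k a < phiL phi0 phi1 k b /\
      phiL phi0 phi1 k b - phiL phi0 phi1 k a < b - a) /\
  (exists y0 y1, I y0 /\ I y1 /\ phi0 y0 = y0 /\ phi1 y1 = y1 /\ y1 < y0).

Definition is_fixpt (I : R -> Prop) (phi0 phi1 : R -> R) (w : word) (y : R) : Prop :=
  I y /\ phiW phi0 phi1 w y = y.

(* x-threshold orbit, shifted: orbit k = x_{k+1}, so orbit 0 = x_1 = phi1 x *)
Fixpoint orbit (phi0 phi1 : R -> R) (x : R) (k : nat) : R :=
  match k with
  | O => phi1 x
  | S k' => let xk := orbit phi0 phi1 x k' in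
            if Rle_dec x xk then phi1 xk else phi0 xk
  end.

(* (w^omega)_i, 0-indexed: (w^omega)_(i+1) in the paper's 1-indexed notation *)
Definition omega (w : word) (i : nat) : bool :=
  nth (i mod length w) w false.

(* x_{k+1} = phi_{(pi^omega)_k}(x_k) for all k >= 1 (written with k = j+1) *)
Definition follows (phi0 phi1 : R -> R) (x : R) (pi : word) : Prop :=
  forall j : nat,
    orbit phi0 phi1 x (S j) = phiL phi0 phi1 (omega pi j) (orbit phi0 phi1 x j).

Definition threshold_word (phi0 phi1 : R -> R) (x : R) (pi : word) : Prop :=
  pi <> [] /\ follows phi0 phi1 x pi /\
  (forall pi' : word, pi' <> [] -> follows phi0 phi1 x pi' ->
     (length pi <= length pi')%nat).

Definition factor_of_omega (u pi : word) : Prop :=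
  exists i : nat, forall j : nat, (j < length u)%nat ->
    omega pi (i + j) = nth j u false.

(* Main.v *)
Require Import Defs.
From Stdlib Require Import Reals List Arith Lia Lra Classical.
Import ListNotations.
Open Scope R_scope.


Lemma pL_I I p0 p1 b t : A2 I p0 p1 -> I t -> I (phiL p0 p1 b t).
Proof. intros [H0 [H1 _]] Ht; destruct b; simpl; auto. Qed.

Lemma pL_mono I p0 p1 b a c : A2 I p0 p1 -> I a -> I c -> a < c ->
  phiL p0 p1 b a < phiL p0 p1 b c /\ phiL p0 p1 b c - phiL p0 p1 b a < c - a.
Proof. intros [_ [_ [H _]]]; auto. Qed.

Lemma pW_cons p0 p1 b w t : phiW p0 p1 (b :: w) t = phiW p0 p1 w (phiL p0 p1 b t).
Proof. reflexivity. Qed.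

Lemma pW_I I p0 p1 w : A2 I p0 p1 -> forall t, I t -> I (phiW p0 p1 w t).
Proof. intros HA; induction w as [|b w IH]; intros t Ht; [exact Ht|].
  rewrite pW_cons; apply IH; apply pL_I; auto. Qed.

Lemma pW_mono I p0 p1 w : A2 I p0 p1 -> forall a c, I a -> I c -> a < c ->
  phiW p0 p1 w a < phiW p0 p1 w c /\ phiW p0 p1 w c - phiW p0 p1 w a <= c - a.
Proof. intros HA; induction w as [|b w IH]; intros a c Ha Hc Hac.
  - unfold phiW; simpl; lra.
  - rewrite !pW_cons. destruct (pL_mono I p0 p1 b a c HA Ha Hc Hac) as [M C].
    destruct (IH _ _ (pL_I _ _ _ b _ HA Ha) (pL_I _ _ _ b _ HA Hc) M). lra. Qed.

Lemma pW_le I p0 p1 w a c : A2 I p0 p1 -> I a -> I c -> a <= c ->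
  phiW p0 p1 w a <= phiW p0 p1 w c.
Proof. intros HA Ha Hc [H|H]; [apply Rlt_le, (pW_mono I p0 p1 w HA); auto | subst; lra]. Qed.

Lemma fix_ge I p0 p1 w y t : A2 I p0 p1 -> I y -> phiW p0 p1 w y = y -> I t -> t <= y ->
  t <= phiW p0 p1 w t.
Proof. intros HA Hy Hf Ht [H|H]; [|subst; lra].
  destruct (pW_mono I p0 p1 w HA t y Ht Hy H). lra. Qed.

Lemma fix_le I p0 p1 w y t : A2 I p0 p1 -> I y -> phiW p0 p1 w y = y -> I t -> y <= t ->
  phiW p0 p1 w t <= t.
Proof. intros HA Hy Hf Ht [H|H]; [|subst; lra].
  destruct (pW_mono I p0 p1 w HA y t Hy Ht H). lra. Qed.

Lemma L_up I p0 p1 w y x z : A2 I p0 p1 -> I y -> phiW p0 p1 w y = y -> x <= y ->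
  I z -> x <= z -> x <= phiW p0 p1 w z.
Proof. intros HA Hy Hf Hxy Hz Hxz.
  destruct (Rle_or_lt z y) as [H|H].
  - pose proof (fix_ge I p0 p1 w y z HA Hy Hf Hz H). lra.
  - destruct (pW_mono I p0 p1 w HA y z Hy Hz H). lra. Qed.

Lemma L_up_strict I p0 p1 w y x z : A2 I p0 p1 -> I y -> phiW p0 p1 w y = y -> x <= y ->
  I z -> x < z -> x < phiW p0 p1 w z.
Proof. intros HA Hy Hf Hxy Hz Hxz.
  destruct (Rle_or_lt z y) as [H|H].
  - pose proof (fix_ge I p0 p1 w y z HA Hy Hf Hz H). lra.
  - destruct (pW_mono I p0 p1 w HA y z Hy Hz H). lra. Qed.

Lemma L_down I p0 p1 w y x z : A2 I p0 p1 -> I y -> phiW p0 p1 w y = y -> y <= x ->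
  I z -> z < x -> phiW p0 p1 w z < x.
Proof. intros HA Hy Hf Hxy Hz Hxz.
  destruct (Rle_or_lt y z) as [H|H].
  - pose proof (fix_le I p0 p1 w y z HA Hy Hf Hz H). lra.
  - destruct (pW_mono I p0 p1 w HA z y Hz Hy H). lra. Qed.

Lemma L_down_le I p0 p1 w y x z : A2 I p0 p1 -> I y -> phiW p0 p1 w y = y -> y <= x ->
  I z -> z <= x -> phiW p0 p1 w z <= x.
Proof. intros HA Hy Hf Hxy Hz Hxz.
  destruct (Rle_or_lt y z) as [H|H].
  - pose proof (fix_le I p0 p1 w y z HA Hy Hf Hz H). lra.
  - destruct (pW_mono I p0 p1 w HA z y Hz Hy H). lra. Qed.

Lemma rep_fix p0 p1 b y m : phiL p0 p1 b y = y -> phiW p0 p1 (repeat b m) y = y.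
Proof. intros H; induction m; [reflexivity|]. simpl repeat; rewrite pW_cons, H; exact IHm. Qed.

Lemma single_fix p0 p1 b y : phiL p0 p1 b y = y -> phiW p0 p1 [b] y = y.
Proof. intros H; exact H. Qed.

Lemma up1 I p0 p1 b y t : A2 I p0 p1 -> I y -> phiL p0 p1 b y = y -> I t -> t < y ->
  t < phiL p0 p1 b t < y.
Proof. intros HA Hy Hf Ht H. destruct (pL_mono I p0 p1 b t y HA Ht Hy H). lra. Qed.
Lemma dn1 I p0 p1 b y t : A2 I p0 p1 -> I y -> phiL p0 p1 b y = y -> I t -> y < t ->
  y < phiL p0 p1 b t < t.
Proof. intros HA Hy Hf Ht H. destruct (pL_mono I p0 p1 b y t HA Hy Ht H). lra. Qed.
Lemma le1 I p0 p1 b y t : A2 I p0 p1 -> I y -> phiL p0 p1 b y = y -> I t -> t <= y ->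
  phiL p0 p1 b t <= y.
Proof. intros HA Hy Hf Ht [H|H]; [destruct (up1 I p0 p1 b y t); auto; lra|subst; lra]. Qed.
Lemma ge1 I p0 p1 b y t : A2 I p0 p1 -> I y -> phiL p0 p1 b y = y -> I t -> y <= t ->
  y <= phiL p0 p1 b t.
Proof. intros HA Hy Hf Ht [H|H]; [destruct (dn1 I p0 p1 b y t); auto; lra|subst; lra]. Qed.

Lemma G2 I p0 p1 y0 y1 m yu x z : A2 I p0 p1 -> I y0 -> I y1 ->
  phiL p0 p1 false y0 = y0 -> phiL p0 p1 true y1 = y1 -> y1 < y0 ->
  I yu -> phiW p0 p1 (false :: true :: repeat false m) yu = yu -> yu <= x -> I x ->
  I z -> z < x -> phiW p0 p1 [false; true] z < x.
Proof.
  intros HA H0 H1 F0 F1 H01 Hyu Fu Hux Hx Hz Hzx.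
  destruct (Rlt_or_le (phiW p0 p1 [false;true] z) x) as [|Hc]; auto; exfalso.
  set (a := phiL p0 p1 false x). set (s := phiL p0 p1 true a).
  assert (Ia : I a) by (apply pL_I; auto). assert (Is : I s) by (apply pL_I; auto).
  assert (Hg : phiW p0 p1 [false;true] z < s) by
    (destruct (pW_mono I p0 p1 [false;true] HA z x Hz Hx Hzx); exact H).
  assert (Hu : phiW p0 p1 (repeat false m) s <= x) by
    (exact (fix_le I p0 p1 _ yu x HA Hyu Fu Hx Hux)).
  destruct (Rle_or_lt s y0) as [Hs|Hs].
  - pose proof (fix_ge I p0 p1 (repeat false m) y0 s HA H0 (rep_fix _ _ _ _ _ F0) Is Hs). lra.
  - destruct (Rle_or_lt a y1) as [Ha|Ha].
    + pose proof (le1 I p0 p1 true y1 a HA H1 F1 Ia Ha). fold s in H. lra.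
    + destruct (dn1 I p0 p1 true y1 a HA H1 F1 Ia Ha) as [_ Hsa]. fold s in Hsa.
      destruct (Rle_or_lt x y0) as [Hx0|Hx0].
      * pose proof (le1 I p0 p1 false y0 x HA H0 F0 Hx Hx0). fold a in H. lra.
      * destruct (dn1 I p0 p1 false y0 x HA H0 F0 Hx Hx0). fold a in H2. lra.
Qed.

Lemma Base2 I p0 p1 y0 y1 m yu x : A2 I p0 p1 -> I y0 -> I y1 ->
  phiL p0 p1 false y0 = y0 -> phiL p0 p1 true y1 = y1 -> y1 < y0 ->
  I yu -> phiW p0 p1 (false :: true :: repeat false m) yu = yu -> yu <= x -> I x ->
  phiL p0 p1 true x < x.
Proof.
  intros HA H0 H1 F0 F1 H01 Hyu Fu Hux Hx.
  destruct (Rlt_or_le (phiL p0 p1 true x) x) as [|Hc]; auto; exfalso.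
  assert (Hx1 : x <= y1).
  { destruct (Rle_or_lt x y1); auto. destruct (dn1 I p0 p1 true y1 x HA H1 F1 Hx H); lra. }
  set (a := phiL p0 p1 false x). set (s := phiL p0 p1 true a).
  assert (Ia : I a) by (apply pL_I; auto). assert (Is : I s) by (apply pL_I; auto).
  destruct (up1 I p0 p1 false y0 x HA H0 F0 Hx ltac:(lra)) as [Hxa _]. fold a in Hxa.
  assert (Hs : phiL p0 p1 true x < s) by (apply (pL_mono I p0 p1 true x a HA Hx Ia Hxa)).
  assert (Hu : phiW p0 p1 (repeat false m) s <= x) by
    (exact (fix_le I p0 p1 _ yu x HA Hyu Fu Hx Hux)).
  destruct (Rle_or_lt s y0) as [Hs0|Hs0].
  - pose proof (fix_ge I p0 p1 (repeat false m) y0 s HA H0 (rep_fix _ _ _ _ _ F0) Is Hs0). lra.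
  - pose proof (L_up_strict I p0 p1 (repeat false m) y0 y0 s HA H0 (rep_fix _ _ _ _ _ F0)
      ltac:(lra) Is Hs0). lra.
Qed.

Lemma Base3 I p0 p1 y0 y1 m yw x : A2 I p0 p1 -> I y0 -> I y1 ->
  phiL p0 p1 false y0 = y0 -> phiL p0 p1 true y1 = y1 -> y1 < y0 ->
  I yw -> phiW p0 p1 (false :: repeat true m) yw = yw -> yw <= x -> I x ->
  phiL p0 p1 true x < x.
Proof.
  intros HA H0 H1 F0 F1 H01 Hyu Fu Hux Hx.
  destruct (Rlt_or_le (phiL p0 p1 true x) x) as [|Hc]; auto; exfalso.
  assert (Hx1 : x <= y1).
  { destruct (Rle_or_lt x y1); auto. destruct (dn1 I p0 p1 true y1 x HA H1 F1 Hx H); lra. }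
  set (s := phiL p0 p1 false x).
  assert (Is : I s) by (apply pL_I; auto).
  destruct (up1 I p0 p1 false y0 x HA H0 F0 Hx ltac:(lra)) as [Hxs _]. fold s in Hxs.
  assert (Hu : phiW p0 p1 (repeat true m) s <= x) by
    (exact (fix_le I p0 p1 _ yw x HA Hyu Fu Hx Hux)).
  destruct (Rle_or_lt s y1) as [Hs0|Hs0].
  - pose proof (fix_ge I p0 p1 (repeat true m) y1 s HA H1 (rep_fix _ _ _ _ _ F1) Is Hs0). lra.
  - pose proof (L_up_strict I p0 p1 (repeat true m) y1 y1 s HA H1 (rep_fix _ _ _ _ _ F1)
      ltac:(lra) Is Hs0). lra.
Qed.

Lemma G4 I p0 p1 y0 y1 m yv x z : A2 I p0 p1 -> I y0 -> I y1 ->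
  phiL p0 p1 false y0 = y0 -> phiL p0 p1 true y1 = y1 -> y1 < y0 ->
  I yv -> phiW p0 p1 (true :: false :: repeat true m) yv = yv -> x <= yv -> I x ->
  I z -> x <= z -> x <= phiW p0 p1 [true; false] z.
Proof.
  intros HA H0 H1 F0 F1 H01 Hyv Fv Hxv Hx Hz Hxz.
  destruct (Rle_or_lt x (phiW p0 p1 [true;false] z)) as [|Hc]; auto; exfalso.
  set (a := phiL p0 p1 true x). set (s := phiL p0 p1 false a).
  assert (Ia : I a) by (apply pL_I; auto). assert (Is : I s) by (apply pL_I; auto).
  assert (Hg : s <= phiW p0 p1 [true;false] z) by
    (exact (pW_le I p0 p1 [true;false] x z HA Hx Hz Hxz)).
  assert (Hu : x <= phiW p0 p1 (repeat true m) s) by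
    (exact (fix_ge I p0 p1 _ yv x HA Hyv Fv Hx Hxv)).
  destruct (Rle_or_lt y1 s) as [Hs|Hs].
  - pose proof (fix_le I p0 p1 (repeat true m) y1 s HA H1 (rep_fix _ _ _ _ _ F1) Is Hs). lra.
  - destruct (Rle_or_lt y0 a) as [Ha|Ha].
    + pose proof (ge1 I p0 p1 false y0 a HA H0 F0 Ia Ha). fold s in H. lra.
    + destruct (up1 I p0 p1 false y0 a HA H0 F0 Ia Ha) as [Hsa _]. fold s in Hsa.
      destruct (Rle_or_lt y1 x) as [Hx0|Hx0].
      * pose proof (ge1 I p0 p1 true y1 x HA H1 F1 Hx Hx0). fold a in H. lra.
      * destruct (up1 I p0 p1 true y1 x HA H1 F1 Hx Hx0). fold a in H. lra.
Qed.

Definition zz p0 p1 x (k : nat) : R :=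
  match k with O => x | S j => orbit p0 p1 x j end.
Definition lt p0 p1 x k : bool := if Rle_dec x (zz p0 p1 x k) then true else false.

Lemma z_step p0 p1 x k : zz p0 p1 x (S k) = phiL p0 p1 (lt p0 p1 x k) (zz p0 p1 x k).
Proof. unfold lt. destruct k; simpl.
  - destruct (Rle_dec x x); [reflexivity| lra].
  - destruct (Rle_dec x (orbit p0 p1 x k)); reflexivity. Qed.

Lemma z_I I p0 p1 x k : A2 I p0 p1 -> I x -> I (zz p0 p1 x k).
Proof. intros HA Hx; induction k; [exact Hx|]. rewrite z_step. apply pL_I; auto. Qed.

Lemma lt_T p0 p1 x k : lt p0 p1 x k = true -> x <= zz p0 p1 x k.
Proof. unfold lt; destruct Rle_dec; congruence. Qed.
Lemma lt_F p0 p1 x k : lt p0 p1 x k = false -> zz p0 p1 x k < x.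
Proof. unfold lt; destruct Rle_dec; [congruence|]. intros; lra. Qed.
Lemma lt_T' p0 p1 x k : x <= zz p0 p1 x k -> lt p0 p1 x k = true.
Proof. unfold lt; destruct Rle_dec; [auto|]. intros; lra. Qed.
Lemma lt_F' p0 p1 x k : zz p0 p1 x k < x -> lt p0 p1 x k = false.
Proof. unfold lt; destruct Rle_dec; [|auto]. intros; lra. Qed.

Lemma z_comp p0 p1 x w : forall k,
  (forall e, (e < length w)%nat -> lt p0 p1 x (k + e) = nth e w false) ->
  zz p0 p1 x (k + length w) = phiW p0 p1 w (zz p0 p1 x k).
Proof. induction w as [|b w IH]; intros k H.
  - simpl. rewrite Nat.add_0_r. reflexivity.
  - simpl length. replace (k + S (length w))%nat with (S k + length w)%nat by lia.
    rewrite IH.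
    + rewrite pW_cons, z_step. f_equal. f_equal. specialize (H 0%nat). simpl in H.
      rewrite Nat.add_0_r in H. apply H. lia.
    + intros e He. replace (S k + e)%nat with (k + S e)%nat by lia.
      apply (H (S e)). simpl; lia.
Qed.

Lemma nth_rep {A} (a d : A) m e : (e < m)%nat -> nth e (repeat a m) d = a.
Proof. revert e; induction m; intros [|e] H; simpl; try lia; auto. apply IHm; lia. Qed.

Ltac lenrep := simpl length; rewrite ?length_app, ?repeat_length; simpl; lia.

Lemma Av1 I p0 p1 x n yw : A2 I p0 p1 -> I x -> (1 <= n)%nat -> I yw ->
  phiW p0 p1 (true :: repeat false (n-1)) yw = yw -> x <= yw ->
  forall k, ~ (forall e, (e < n)%nat -> lt p0 p1 x (k + e) = false).
Proof.
  intros HA Hx Hn Hy Hf Hxy k; induction k as [|k IH]; intros H.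
  - specialize (H 0%nat ltac:(lia)). apply lt_F in H. simpl in H. lra.
  - destruct (lt p0 p1 x k) eqn:E.
    + assert (Hc := z_comp p0 p1 x (true :: repeat false (n-1)) k).
      replace (k + length (true :: repeat false (n-1)))%nat with (S k + (n-1))%nat in Hc by lenrep.
      pose proof (lt_F p0 p1 x _ (H (n-1)%nat ltac:(lia))) as Hlt.
      pose proof (L_up I p0 p1 _ yw x (zz p0 p1 x k) HA Hy Hf Hxy (z_I I p0 p1 x k HA Hx)
          (lt_T _ _ _ _ E)).
      rewrite Hc in Hlt; [lra|].
      intros [|e] He; [rewrite Nat.add_0_r; exact E|].
      simpl nth. rewrite nth_repeat. replace (k + S e)%nat with (S k + e)%nat by lia.
      apply H. simpl length in He. rewrite repeat_length in He. lia.
    + apply IH. intros e He. destruct e.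
      * rewrite Nat.add_0_r; exact E.
      * replace (k + S e)%nat with (S k + e)%nat by lia. apply H; lia.
Qed.

Lemma Av3 I p0 p1 x n y0 y1 yw : A2 I p0 p1 -> I x -> (1 <= n)%nat -> I y0 -> I y1 ->
  phiL p0 p1 false y0 = y0 -> phiL p0 p1 true y1 = y1 -> y1 < y0 -> I yw ->
  phiW p0 p1 (false :: repeat true (n-1)) yw = yw -> yw <= x ->
  forall k, ~ (forall e, (e < n)%nat -> lt p0 p1 x (S k + e) = true).
Proof.
  intros HA Hx Hn H0 H1 F0 F1 H01 Hy Hf Hxy k; induction k as [|k IH]; intros H.
  - specialize (H 0%nat ltac:(lia)). apply lt_T in H. simpl in H.
    pose proof (Base3 I p0 p1 y0 y1 (n-1) yw x HA H0 H1 F0 F1 H01 Hy Hf Hxy Hx). simpl in H2. lra.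
  - destruct (lt p0 p1 x (S k)) eqn:E.
    + apply IH. intros e He. destruct e.
      * rewrite Nat.add_0_r; exact E.
      * replace (S k + S e)%nat with (S (S k) + e)%nat by lia. apply H; lia.
    + assert (Hc := z_comp p0 p1 x (false :: repeat true (n-1)) (S k)).
      replace (S k + length (false :: repeat true (n-1)))%nat with (S (S k) + (n-1))%nat in Hc by lenrep.
      pose proof (lt_T p0 p1 x _ (H (n-1)%nat ltac:(lia))) as Hlt.
      pose proof (L_down I p0 p1 _ yw x (zz p0 p1 x (S k)) HA Hy Hf Hxy (z_I I p0 p1 x _ HA Hx)
          (lt_F _ _ _ _ E)).
      rewrite Hc in Hlt; [lra|].
      intros [|e] He; [rewrite Nat.add_0_r; exact E|].
      simpl length in He. rewrite repeat_length in He.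
      simpl nth. rewrite nth_rep by lia. replace (S k + S e)%nat with (S (S k) + e)%nat by lia.
      apply H. lia.
Qed.

Lemma Av11 I p0 p1 x m y0 y1 yu : A2 I p0 p1 -> I x -> I y0 -> I y1 ->
  phiL p0 p1 false y0 = y0 -> phiL p0 p1 true y1 = y1 -> y1 < y0 -> I yu ->
  phiW p0 p1 (false :: true :: repeat false m) yu = yu -> yu <= x ->
  forall k, ~ (lt p0 p1 x (S k) = true /\ lt p0 p1 x (S (S k)) = true).
Proof.
  intros HA Hx H0 H1 F0 F1 H01 Hy Hf Hxy k; induction k as [|k IH]; intros [Ha Hb].
  - apply lt_T in Ha. simpl in Ha.
    pose proof (Base2 I p0 p1 y0 y1 m yu x HA H0 H1 F0 F1 H01 Hy Hf Hxy Hx). simpl in H. lra.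
  - destruct (lt p0 p1 x (S k)) eqn:E; [apply IH; auto|].
    assert (Hc := z_comp p0 p1 x [false; true] (S k)). simpl length in Hc.
    replace (S k + 2)%nat with (S (S (S k))) in Hc by lia.
    pose proof (G2 I p0 p1 y0 y1 m yu x _ HA H0 H1 F0 F1 H01 Hy Hf Hxy Hx
      (z_I I p0 p1 x (S k) HA Hx) (lt_F _ _ _ _ E)).
    apply lt_T in Hb. rewrite Hc in Hb; [lra|].
    intros [|[|e]] He; simpl in He; try lia.
    + rewrite Nat.add_0_r; exact E.
    + replace (S k + 1)%nat with (S (S k)) by lia. exact Ha.
Qed.

Lemma Av00 I p0 p1 x m y0 y1 yv : A2 I p0 p1 -> I x -> I y0 -> I y1 ->
  phiL p0 p1 false y0 = y0 -> phiL p0 p1 true y1 = y1 -> y1 < y0 -> I yv ->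
  phiW p0 p1 (true :: false :: repeat true m) yv = yv -> x <= yv ->
  forall k, ~ (lt p0 p1 x k = false /\ lt p0 p1 x (S k) = false).
Proof.
  intros HA Hx H0 H1 F0 F1 H01 Hy Hf Hxy k; induction k as [|k IH]; intros [Ha Hb].
  - apply lt_F in Ha. simpl in Ha. lra.
  - destruct (lt p0 p1 x k) eqn:E; [|apply IH; auto].
    assert (Hc := z_comp p0 p1 x [true; false] k). simpl length in Hc.
    replace (k + 2)%nat with (S (S k)) in Hc by lia.
    pose proof (G4 I p0 p1 y0 y1 m yv x _ HA H0 H1 F0 F1 H01 Hy Hf Hxy Hx
      (z_I I p0 p1 x k HA Hx) (lt_T _ _ _ _ E)).
    apply lt_F in Hb. rewrite Hc in Hb; [lra|].
    intros [|[|e]] He; simpl in He; try lia.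
    + rewrite Nat.add_0_r; exact E.
    + replace (k + 1)%nat with (S k) by lia. exact Ha.
Qed.

Lemma Av2 I p0 p1 x n y0 y1 yu : A2 I p0 p1 -> I x -> (1 <= n)%nat -> I y0 -> I y1 ->
  phiL p0 p1 false y0 = y0 -> phiL p0 p1 true y1 = y1 -> y1 < y0 -> I yu ->
  phiW p0 p1 (false :: true :: repeat false (n-1)) yu = yu -> yu <= x ->
  forall k, ~ (lt p0 p1 x (S k) = true /\
    (forall e, (1 <= e < n)%nat -> lt p0 p1 x (S k + e) = false) /\
    lt p0 p1 x (S k + n) = true).
Proof.
  intros HA Hx Hn H0 H1 F0 F1 H01 Hy Hf Hxy k [Ha [Hm Hb]].
  destruct k as [|k].
  - apply lt_T in Ha. simpl in Ha.
    pose proof (Base2 I p0 p1 y0 y1 (n-1) yu x HA H0 H1 F0 F1 H01 Hy Hf Hxy Hx). simpl in H. lra.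
  - destruct (lt p0 p1 x (S k)) eqn:E.
    + apply (Av11 I p0 p1 x (n-1) y0 y1 yu HA Hx H0 H1 F0 F1 H01 Hy Hf Hxy k); auto.
    + assert (Hc := z_comp p0 p1 x (false :: true :: repeat false (n-1)) (S k)).
      replace (S k + length (false :: true :: repeat false (n-1)))%nat with (S (S k) + n)%nat in Hc by lenrep.
      pose proof (L_down I p0 p1 _ yu x (zz p0 p1 x (S k)) HA Hy Hf Hxy (z_I I p0 p1 x _ HA Hx)
          (lt_F _ _ _ _ E)).
      apply lt_T in Hb. rewrite Hc in Hb; [lra|].
      intros [|[|e]] He; simpl length in He; rewrite ?repeat_length in He.
      * rewrite Nat.add_0_r; exact E.
      * replace (S k + 1)%nat with (S (S k)) by lia. exact Ha.
      * simpl nth. rewrite nth_rep by lia.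
        replace (S k + S (S e))%nat with (S (S k) + S e)%nat by lia. apply Hm. lia.
Qed.

Lemma Av4 I p0 p1 x n y0 y1 yv : A2 I p0 p1 -> I x -> (1 <= n)%nat -> I y0 -> I y1 ->
  phiL p0 p1 false y0 = y0 -> phiL p0 p1 true y1 = y1 -> y1 < y0 -> I yv ->
  phiW p0 p1 (true :: false :: repeat true (n-1)) yv = yv -> x <= yv ->
  forall k, ~ (lt p0 p1 x (S k) = false /\
    (forall e, (1 <= e < n)%nat -> lt p0 p1 x (S k + e) = true) /\
    lt p0 p1 x (S k + n) = false).
Proof.
  intros HA Hx Hn H0 H1 F0 F1 H01 Hy Hf Hxy k [Ha [Hm Hb]].
  destruct (lt p0 p1 x k) eqn:E.
  - assert (Hc := z_comp p0 p1 x (true :: false :: repeat true (n-1)) k).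
    replace (k + length (true :: false :: repeat true (n-1)))%nat with (S k + n)%nat in Hc by lenrep.
    pose proof (L_up I p0 p1 _ yv x (zz p0 p1 x k) HA Hy Hf Hxy (z_I I p0 p1 x _ HA Hx)
          (lt_T _ _ _ _ E)).
    apply lt_F in Hb. rewrite Hc in Hb; [lra|].
    intros [|[|e]] He; simpl length in He; rewrite ?repeat_length in He.
    * rewrite Nat.add_0_r; exact E.
    * replace (k + 1)%nat with (S k) by lia. exact Ha.
    * simpl nth. rewrite nth_rep by lia.
      replace (k + S (S e))%nat with (S k + S e)%nat by lia. apply Hm. lia.
  - apply (Av00 I p0 p1 x (n-1) y0 y1 yv HA Hx H0 H1 F0 F1 H01 Hy Hf Hxy k); auto.
Qed.

Lemma orb_step p0 p1 x j : orbit p0 p1 x (S j) = phiL p0 p1 (lt p0 p1 x (S j)) (orbit p0 p1 x j).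
Proof. exact (z_step p0 p1 x (S j)). Qed.

Lemma omega_single b j : omega [b] j = b.
Proof. unfold omega. simpl length. rewrite Nat.mod_1_r. reflexivity. Qed.

Lemma grow_contra (u : nat -> R) d B : 0 < d -> (forall j, u j + d <= u (S j)) ->
  (forall j, u j < B) -> False.
Proof.
  intros Hd Hs HB.
  assert (G : forall j, u 0%nat + INR j * d <= u j).
  { induction j; [simpl; lra|]. rewrite S_INR. specialize (Hs j). lra. }
  destruct (INR_unbounded ((B - u 0%nat) / d)) as [j Hj].
  assert (E : (B - u 0%nat) / d * d = B - u 0%nat) by (field; lra).
  assert (INR j * d > (B - u 0%nat) / d * d) by nra.
  specialize (G j); specialize (HB j). lra.
Qed.

Lemma EQ I p0 p1 x pi : A2 I p0 p1 -> I x -> threshold_word p0 p1 x pi ->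
  exists K, forall j, (K <= j)%nat -> omega pi j = lt p0 p1 x (S j).
Proof.
  intros HA Hx [Hne [Hfol Hmin]].
  pose proof HA as HA'. unfold A2 in HA'.
  destruct HA' as (P0 & P1 & M & y0 & y1 & H0 & H1 & F0 & F1 & H01).
  change (p0 y0 = y0) with (phiL p0 p1 false y0 = y0) in F0.
  change (p1 y1 = y1) with (phiL p0 p1 true y1 = y1) in F1.
  assert (OI : forall j, I (orbit p0 p1 x j)) by (intro j; exact (z_I I p0 p1 x (S j) HA Hx)).
  assert (cross : forall j, omega pi j <> lt p0 p1 x (S j) ->
            phiL p0 p1 false (orbit p0 p1 x j) = phiL p0 p1 true (orbit p0 p1 x j)).
  { intros j Hn. pose proof (Hfol j) as E1. pose proof (orb_step p0 p1 x j) as E2.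
    destruct (omega pi j), (lt p0 p1 x (S j)); congruence. }
  assert (nocross : forall o, I o -> y1 <= o <= y0 -> phiL p0 p1 false o = phiL p0 p1 true o -> False).
  { intros o Io [Ha Hb] E.
    destruct Hb as [Hb|Hb].
    - destruct (up1 I p0 p1 false y0 o HA H0 F0 Io Hb).
      destruct Ha as [Ha|Ha].
      + destruct (dn1 I p0 p1 true y1 o HA H1 F1 Io Ha). lra.
      + subst o. lra.
    - subst o. destruct (dn1 I p0 p1 true y1 y0 HA H1 F1 H0 H01). lra. }
  assert (inv : forall o b, I o -> y1 <= o <= y0 -> y1 <= phiL p0 p1 b o <= y0).
  { intros o b Io [Ha Hb]. destruct b.
    - split; [apply (ge1 I p0 p1 true y1 o); auto|].
      pose proof (fix_le I p0 p1 [true] y1 o HA H1 F1 Io Ha). simpl in H. unfold phiW in H; simpl in H. simpl. lra.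
    - split; [|apply (le1 I p0 p1 false y0 o); auto].
      pose proof (fix_ge I p0 p1 [false] y0 o HA H0 F0 Io Hb). unfold phiW in H; simpl in H. simpl. lra. }
  destruct (classic (exists K, y1 <= orbit p0 p1 x K <= y0)) as [[K HK]|HN].
  - exists K. intros j Hj.
    assert (Hin : forall d, y1 <= orbit p0 p1 x (K + d) <= y0).
    { induction d; [rewrite Nat.add_0_r; exact HK|].
      replace (K + S d)%nat with (S (K + d)) by lia. rewrite orb_step. apply inv; auto. }
    destruct (Bool.bool_dec (omega pi j) (lt p0 p1 x (S j))) as [e|ne]; [exact e|].
    exfalso. apply (nocross (orbit p0 p1 x j) (OI j)).
    + replace j with (K + (j - K))%nat by lia. apply Hin.
    + apply cross; auto.
  - assert (Hout : forall j, orbit p0 p1 x j < y1 \/ y0 < orbit p0 p1 x j).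
    { intro j. destruct (Rlt_or_le (orbit p0 p1 x j) y1); auto.
      destruct (Rlt_or_le y0 (orbit p0 p1 x j)); auto. exfalso; apply HN; exists j; lra. }
    assert (Hpi : forall b, follows p0 p1 x [b] -> exists b', pi = [b']).
    { intros b Hb. specialize (Hmin [b] ltac:(discriminate) Hb). simpl in Hmin.
      destruct pi as [|b' [|c r]]; [congruence| exists b'; reflexivity | simpl in Hmin; lia]. }
    destruct (Hout 0%nat) as [L|U].
    + assert (All : forall j, orbit p0 p1 x j < y1).
      { induction j; auto. destruct (Hout (S j)) as [|U]; auto. exfalso.
        rewrite orb_step in U. destruct (lt p0 p1 x (S j)).
        * destruct (up1 I p0 p1 true y1 _ HA H1 F1 (OI j) IHj). lra.
        * destruct (up1 I p0 p1 false y0 _ HA H0 F0 (OI j) ltac:(lra)). lra. }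
      assert (Hxy : x < y1).
      { destruct (Rlt_or_le x y1); auto. exfalso.
        pose proof (ge1 I p0 p1 true y1 x HA H1 F1 Hx H). specialize (All 0%nat). simpl in All. simpl in H2. lra. }
      assert (Up : forall j, x <= orbit p0 p1 x j).
      { induction j.
        - destruct (up1 I p0 p1 true y1 x HA H1 F1 Hx Hxy). simpl. simpl in H. lra.
        - rewrite orb_step. destruct (lt p0 p1 x (S j)).
          + destruct (up1 I p0 p1 true y1 _ HA H1 F1 (OI j) (All j)). lra.
          + destruct (up1 I p0 p1 false y0 _ HA H0 F0 (OI j) ltac:(specialize (All j); lra)). lra. }
      assert (LT : forall j, lt p0 p1 x (S j) = true) by (intro j; apply lt_T'; exact (Up j)).
      destruct (Hpi true) as [b' Eb].
      { intro j. rewrite omega_single, orb_step, LT. reflexivity. }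
      subst pi. destruct b'.
      * exists 0%nat. intros j _. rewrite omega_single, LT. reflexivity.
      * exfalso. destruct (up1 I p0 p1 false y0 y1 HA H0 F0 H1 H01) as [Hd _].
        apply (grow_contra (orbit p0 p1 x) (phiL p0 p1 false y1 - y1) y1); [lra| |exact All].
        intro j. rewrite (Hfol j), omega_single.
        destruct (pL_mono I p0 p1 false _ y1 HA (OI j) H1 (All j)). lra.
    + assert (All : forall j, y0 < orbit p0 p1 x j).
      { induction j; auto. destruct (Hout (S j)) as [L|]; auto. exfalso.
        rewrite orb_step in L. destruct (lt p0 p1 x (S j)).
        * destruct (dn1 I p0 p1 true y1 _ HA H1 F1 (OI j) ltac:(lra)). lra.
        * destruct (dn1 I p0 p1 false y0 _ HA H0 F0 (OI j) IHj). lra. }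
      assert (Hxy : y1 < x).
      { destruct (Rlt_or_le y1 x); auto. exfalso.
        pose proof (le1 I p0 p1 true y1 x HA H1 F1 Hx H). specialize (All 0%nat). simpl in All. simpl in H2. lra. }
      assert (Dn : forall j, orbit p0 p1 x j < x).
      { induction j.
        - destruct (dn1 I p0 p1 true y1 x HA H1 F1 Hx Hxy). simpl. simpl in H2. lra.
        - rewrite orb_step. destruct (lt p0 p1 x (S j)).
          + destruct (dn1 I p0 p1 true y1 _ HA H1 F1 (OI j) ltac:(specialize (All j); lra)). lra.
          + destruct (dn1 I p0 p1 false y0 _ HA H0 F0 (OI j) (All j)). lra. }
      assert (LT : forall j, lt p0 p1 x (S j) = false) by (intro j; apply lt_F'; exact (Dn j)).
      destruct (Hpi false) as [b' Eb].
      { intro j. rewrite omega_single, orb_step, LT. reflexivity. }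
      subst pi. destruct b'.
      * exfalso. destruct (dn1 I p0 p1 true y1 y0 HA H1 F1 H0 H01) as [_ Hd].
        apply (grow_contra (fun j => - orbit p0 p1 x j) (y0 - phiL p0 p1 true y0) (- y0)); [lra| |].
        -- intro j. rewrite (Hfol j), omega_single.
           destruct (pL_mono I p0 p1 true y0 _ HA H0 (OI j) (All j)). lra.
        -- intro j. specialize (All j). lra.
      * exists 0%nat. intros j _. rewrite omega_single, LT. reflexivity.
Qed.

Lemma factor_lt I p0 p1 x pi u : A2 I p0 p1 -> I x -> threshold_word p0 p1 x pi ->
  factor_of_omega u pi ->
  exists k, forall e, (e < length u)%nat -> lt p0 p1 x (S k + e) = nth e u false.
Proof.
  intros HA Hx Ht [i Hi]. destruct (EQ I p0 p1 x pi HA Hx Ht) as [K HK].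
  destruct Ht as [Hne _]. set (p := length pi).
  assert (Hp : (1 <= p)%nat) by (unfold p; destruct pi; [congruence|simpl; lia]).
  exists (i + K * p)%nat. intros e He.
  simpl. rewrite <- HK by nia. rewrite <- (Hi e He).
  unfold omega. fold p. f_equal.
  replace (i + K * p + e)%nat with (i + e + K * p)%nat by lia.
  apply Nat.Div0.mod_add.
Qed.

Theorem mainTheorem6 (I : R -> Prop) (phi0 phi1 : R -> R) (x : R) (pi : word) (n : nat) :
  is_interval I -> A2 I phi0 phi1 -> I x ->
  threshold_word phi0 phi1 x pi -> (1 <= n)%nat ->
  ((exists y, is_fixpt I phi0 phi1 (true :: repeat false (n - 1)) y /\ x <= y) ->
     ~ factor_of_omega (repeat false n) pi) /\
  ((exists y, is_fixpt I phi0 phi1 (false :: true :: repeat false (n - 1)) y /\ y <= x) ->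
     ~ factor_of_omega (true :: repeat false (n - 1) ++ [true]) pi) /\
  ((exists y, is_fixpt I phi0 phi1 (false :: repeat true (n - 1)) y /\ y <= x) ->
     ~ factor_of_omega (repeat true n) pi) /\
  ((exists y, is_fixpt I phi0 phi1 (true :: false :: repeat true (n - 1)) y /\ x <= y) ->
     ~ factor_of_omega (false :: repeat true (n - 1) ++ [false]) pi).
Proof.
  intros _ HA Hx Ht Hn.
  pose proof HA as HA'. unfold A2 in HA'.
  destruct HA' as (P0 & P1 & M & y0 & y1 & H0 & H1 & F0 & F1 & H01).
  change (phi0 y0 = y0) with (phiL phi0 phi1 false y0 = y0) in F0.
  change (phi1 y1 = y1) with (phiL phi0 phi1 true y1 = y1) in F1.
  split; [|split; [|split]].
  - intros [y [[Iy Fy] Hxy]] Hf.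
    destruct (factor_lt I phi0 phi1 x pi _ HA Hx Ht Hf) as [k Hk].
    apply (Av1 I phi0 phi1 x n y HA Hx Hn Iy Fy Hxy (S k)).
    intros e He. rewrite Hk by (rewrite repeat_length; lia). apply nth_repeat.
  - intros [y [[Iy Fy] Hxy]] Hf.
    destruct (factor_lt I phi0 phi1 x pi _ HA Hx Ht Hf) as [k Hk].
    assert (Len : length (true :: repeat false (n - 1) ++ [true]) = S n)
      by (simpl; rewrite length_app, repeat_length; simpl; lia).
    rewrite Len in Hk.
    apply (Av2 I phi0 phi1 x n y0 y1 y HA Hx Hn H0 H1 F0 F1 H01 Iy Fy Hxy k).
    split; [|split].
    + specialize (Hk 0%nat ltac:(lia)). rewrite Nat.add_0_r in Hk. exact Hk.
    + intros e He. rewrite Hk by lia. destruct e as [|e]; [lia|]. simpl nth.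
      rewrite app_nth1 by (rewrite repeat_length; lia). apply nth_repeat.
    + rewrite Hk by lia. destruct n as [|m]; [lia|]. simpl nth.
      rewrite app_nth2 by (rewrite repeat_length; lia). rewrite repeat_length.
      match goal with |- nth ?q _ _ = _ => replace q with 0%nat by lia end. reflexivity.
  - intros [y [[Iy Fy] Hxy]] Hf.
    destruct (factor_lt I phi0 phi1 x pi _ HA Hx Ht Hf) as [k Hk].
    apply (Av3 I phi0 phi1 x n y0 y1 y HA Hx Hn H0 H1 F0 F1 H01 Iy Fy Hxy k).
    intros e He. rewrite Hk by (rewrite repeat_length; lia). apply nth_rep; lia.
  - intros [y [[Iy Fy] Hxy]] Hf.
    destruct (factor_lt I phi0 phi1 x pi _ HA Hx Ht Hf) as [k Hk].
    assert (Len : length (false :: repeat true (n - 1) ++ [false]) = S n)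
      by (simpl; rewrite length_app, repeat_length; simpl; lia).
    rewrite Len in Hk.
    apply (Av4 I phi0 phi1 x n y0 y1 y HA Hx Hn H0 H1 F0 F1 H01 Iy Fy Hxy k).
    split; [|split].
    + specialize (Hk 0%nat ltac:(lia)). rewrite Nat.add_0_r in Hk. exact Hk.
    + intros e He. rewrite Hk by lia. destruct e as [|e]; [lia|]. simpl nth.
      rewrite app_nth1 by (rewrite repeat_length; lia). apply nth_rep; lia.
    + rewrite Hk by lia. destruct n as [|m]; [lia|]. simpl nth.
      rewrite app_nth2 by (rewrite repeat_length; lia). rewrite repeat_length.
      match goal with |- nth ?q _ _ = _ => replace q with 0%nat by lia end. reflexivity.
Qed.
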